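(* Let $a$ be a positive integer, let $G$ be a finite simple graph of arboricity at most $a$ containing no isolated edges, and let $\mathcal{G}\cong\mathcal{G}_1\times\mathcal{G}_2\times\cdots\times\mathcal{G}_a$ be an Abelian group that is a product of Abelian groups $\mathcal{G}_i$ with $|\mathcal{G}_i|\geq 4$ for $i=1,\ldots,a$. Then there exists a labeling $f\colon E(G)\to\mathcal{G}\setminus\{0\}$ such that $w_f(u)\neq w_f(v)$ for every edge $uv$ of $G$.
   Context: The arboricity of $G$ is the least number of forests into which $E(G)$ can be decomposed. An isolated edge is a connected component isomorphic to $K_2$. $w_f(v)=\sum_{u\in N(v)}f(uv)$, the sum in $\mathcal{G}$. *)

(* Defs.v *)
From HB Require Import structures.
From mathcomp Require Import all_boot all_order all_algebra.
Set Implicit Arguments. Unset Strict Implicit. Unset Printing Implicit Defensive.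
Import GRing.Theory.
Local Open Scope ring_scope.

(* A finite simple graph: vertex type T : finType, adjacency e : rel T,
   symmetric and irreflexive.  An edge uv is represented by the 2-set [set u; v]. *)
Definition simple_graph (T : finType) (e : rel T) : Prop :=
  symmetric e /\ irreflexive e.

Definition edge_of (T : finType) (u v : T) : {set T} := [set u; v].

Definition nbhd (T : finType) (e : rel T) (v : T) : {set T} := [set u | e v u].

Definition acyclic (T : finType) (r : rel T) : Prop :=
  forall s : seq T, uniq s -> (3 <= size s)%N -> ~~ cycle r s.

(* Arboricity at most a: E(G) can be decomposed into a forests, i.e. there
   is an assignment of each edge to one of a classes, each class acyclic. *)
Definition arboricity_le (T : finType) (e : rel T) (a : nat) : Prop :=
  exists c : {set T} -> 'I_a,
    forall i : 'I_a, acyclic (fun x y => e x y && (c (edge_of x y) == i)).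

(* No connected component is isomorphic to K_2: there is no edge uv with
   both endpoints of degree 1. *)
Definition no_isolated_edge (T : finType) (e : rel T) : Prop :=
  forall u v, e u v -> ~ (#|nbhd e u| = 1%N /\ #|nbhd e v| = 1%N).

Definition weight (T : finType) (e : rel T) (G : zmodType)
  (f : {set T} -> G) (v : T) : G :=
  \sum_(u in nbhd e v) f (edge_of u v).

Definition card_ge4 (A : eqType) : Prop :=
  exists s : seq A, uniq s /\ (4 <= size s)%N.

Definition iso_to_product (G : zmodType) (a : nat) (Gi : 'I_a -> zmodType)
  (phi : G -> forall i, Gi i) : Prop :=
  (forall x y i, phi (x + y) i = phi x i + phi y i) /\
  (forall x y, phi x = phi y -> x = y) /\
  (forall g : forall i, Gi i, exists x, phi x = g).

(* Main.v *)
Require Import Defs.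
From HB Require Import structures.
From mathcomp Require Import all_boot all_order all_algebra.
From mathcomp Require Import zify.
Import GRing.Theory.
Local Open Scope ring_scope.
Set Implicit Arguments. Unset Strict Implicit. Unset Printing Implicit Defensive.

Lemma avoid3 (A : eqType) (s : seq A) (a b c : A) : uniq s -> (4 <= size s)%N ->
  exists x, [/\ x \in s, x != a, x != b & x != c].
Proof.
move=> us hs.
case: (boolP (all (mem [:: a; b; c]) s)) => [/allP sub | ].
  have := uniq_leq_size us sub => /= h.
  by have := leq_trans hs h.
rewrite -has_predC => /hasP [x xs]; rewrite /= !inE !negb_or => /and3P [xa xb xc].
by exists x.
Qed.

Section Local.
Variable Gm : zmodType.
Hypothesis h4 : card_ge4 Gm.

Lemma exists_t (m : nat) (y : Gm) : y != 0 -> exists t : Gm, t != 0 /\ y + t *+ m != 0.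
Proof.
move=> y0; case: h4 => s [us hs].
have [t1 [_ t10 _ _]] := avoid3 0 0 0 us hs.
have [t2 [_ t20 t21 _]] := avoid3 0 t1 0 us hs.
have [E1|E1] := eqVneq (y + t1 *+ m) 0; last by exists t1.
have [E2|E2] := eqVneq (y + t2 *+ m) 0; last by exists t2.
exists (t1 - t2); split; first by rewrite subr_eq0 eq_sym.
have -> : y + (t1 - t2) *+ m = (y + t1 *+ m) - (y + t2 *+ m) + y.
  by rewrite mulrnBl [y + t1 *+ m]addrC addrKA addrC.
by rewrite E1 E2 subrr add0r.
Qed.

Lemma local_lemma (T : finType) (L : {set T}) (y X : Gm) : y != 0 -> L != set0 ->
  exists g : T -> Gm, [/\ forall l, l \in L -> g l != 0,
     y + \sum_(l in L) g l != X &
     forall l, l \in L -> y + \sum_(l' in L) g l' != g l].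
Proof.
move=> y0 /set0Pn [l0 l0L].
have [t [t0 Rt]] := exists_t (#|L|.-1) y0.
set R := y + t *+ #|L|.-1 in Rt.
case: h4 => s [us hs].
have [S0 [_ SX St SR]] := avoid3 X t R us hs.
exists (fun l => if l == l0 then S0 - R else t).
have sumE : y + \sum_(l in L) (if l == l0 then S0 - R else t) = S0.
  rewrite (bigD1 l0) //= eqxx.
  rewrite (eq_bigr (fun _ => t)); last by move=> i /andP [_ /negbTE ->].
  rewrite sumr_const.
  have -> : #|(fun i : T => (i \in L) && (i != l0))| = #|L|.-1.
    by rewrite (cardD1 l0 L) l0L /=; apply: eq_card => i; rewrite !inE andbC.
  by rewrite /R addrCA subrK.
rewrite sumE; split => //.
- by move=> l _; case: ifP => _ //; rewrite subr_eq0.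
- move=> l _; case: ifP => _ //.
  by rewrite -subr_eq0 opprB addrC subrK.
Qed.
End Local.



Section Paths.
Variable T : finType.
Implicit Types H R : rel T.

Lemma cyc_two_nbrs R (s : seq T) x : uniq s -> (3 <= size s)%N -> cycle R s -> x \in s ->
  exists a b, [/\ a != b, R x a, R b x, a \in s & b \in s].
Proof.
move=> us hs cs xs; case: (rot_to xs) => i s' E.
have us' : uniq (x :: s') by rewrite -E rot_uniq.
have cs' : cycle R (x :: s') by rewrite -E rot_cycle.
have ms : forall z, z \in x :: s' -> z \in s by move=> z; rewrite -E mem_rot.
have hs' : (3 <= size (x :: s'))%N by rewrite -E size_rot.
case: s' E us' cs' ms hs' => [|a [|c s3]] //= E us' cs' ms hs'.
move: cs'; rewrite /cycle rcons_path => /and4P [Rxa _ _ Rbx].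
exists a, (last c s3); split => //.
- apply/negP => /eqP ab; move: us' => /and4P [_ + _ _].
  by rewrite ab mem_last.
- by apply: ms; rewrite !inE eqxx orbT.
- by apply: ms; rewrite !inE; move: (mem_last c s3); rewrite inE => ->; rewrite !orbT.
Qed.

Lemma back_edge H x y (s : seq T) z : acyclic H -> uniq (x :: y :: s) ->
  path H x (y :: s) -> z \in s -> ~~ H z x.
Proof.
move=> ac us ps zs; case/splitPr: zs us ps => s1 s2 us ps.
apply/negP => Hzx.
have := ac (x :: y :: rcons s1 z).
have -> : uniq (x :: y :: rcons s1 z).
  by move: us; rewrite -cat_rcons -!cat_cons cat_uniq => /andP [].
have -> : (3 <= size (x :: y :: rcons s1 z))%N by rewrite /= size_rcons.
move=> /(_ isT isT); apply/negP/negPn.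
rewrite /cycle rcons_path /= last_rcons Hzx andbT.
by move: ps; rewrite -cat_rcons -cat_cons cat_path => /andP [].
Qed.

Lemma max_path H u v : irreflexive H -> H u v ->
  exists x s, [/\ uniq (x :: s), path H x s, (1 <= size s)%N &
     forall x' s', uniq (x' :: s') -> path H x' s' -> (size s' <= size s)%N].
Proof.
move=> irr huv.
pose P n := [exists x : T, exists t : n.-tuple T, uniq (x :: t) && path H x t].
have ex1 : exists n, P n.
  exists 1%N; apply/existsP; exists u; apply/existsP; exists [tuple v].
  rewrite /= huv !andbT inE; apply/eqP => e; by move: huv; rewrite e irr.
have bnd : forall n, P n -> (n <= #|T|)%N.
  move=> n /existsP [x /existsP [t /andP [ut _]]].
  have := max_card (mem (x :: t)); rewrite (card_uniqP ut) /= size_tuple.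
  exact: ltnW.
case: (ex_maxnP ex1 bnd) => n /existsP [x /existsP [t /andP [ut pt]]] mx.
exists x, t; split => //.
- rewrite size_tuple; apply: mx.
  apply/existsP; exists u; apply/existsP; exists [tuple v].
  rewrite /= huv !andbT inE; apply/eqP => e; by move: huv; rewrite e irr.
- move=> x' s' us' ps'; rewrite size_tuple; apply: mx.
  apply/existsP; exists x'; apply/existsP; exists (in_tuple s'); by rewrite us' ps'.
Qed.

Lemma pendant H : symmetric H -> irreflexive H -> acyclic H -> forall u v, H u v ->
  (exists l p, [/\ H l p, forall z, H l z -> z = p & forall z, H p z -> z = l]) \/
  (exists p q, [/\ H p q, exists l, H p l /\ l != q &
      forall l, H p l -> l != q -> forall z, H l z -> z = p]).
Proof.
move=> sym irr ac u v huv.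
have [l [s [us ps hs mx]]] := max_path irr huv.
case: s us ps hs mx => [|p rest] // us ps _ mx.
have Hlp : H l p by move: ps => /= /andP [].
have prest : path H p rest by move: ps => /= /andP [].
have claim1 : forall z, H l z -> z = p.
  move=> z Hlz; apply/eqP; apply/negPn/negP => zp.
  have [zin|zin] := boolP (z \in l :: p :: rest).
    move: zin; rewrite !inE => /orP [/eqP zl|/orP [/eqP zp'|zr]].
    - by move: Hlz; rewrite zl irr.
    - by rewrite zp' eqxx in zp.
    - by move: (back_edge ac us ps zr); rewrite sym Hlz.
  have := mx z (l :: p :: rest).
  have -> : uniq (z :: l :: p :: rest) by rewrite cons_uniq zin us.
  have -> : path H z (l :: p :: rest) by rewrite /= sym Hlz.
  by move=> /(_ isT isT); rewrite /= ltnn.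
have [pleaf|] := boolP [forall z, H p z ==> (z == l)].
  left; exists l, p; split => // z Hpz.
  by move/forallP: pleaf => /(_ z); rewrite Hpz => /eqP.
rewrite negb_forall => /existsP [z]; rewrite negb_imply => /andP [Hpz zl].
have ulp : l \notin p :: rest by move: us => /andP [].
have upr : uniq (p :: rest) by move: us => /andP [].
case: rest us ps mx prest ulp upr => [|q rest'] us ps mx prest ulp upr.
  have := mx z [:: p; l].
  have -> : uniq [:: z; p; l].
    rewrite /= !inE !negb_or andbT zl andbT.
    apply/andP; split.
    - by apply/negP => /eqP e; move: Hpz; rewrite e irr.
    - by move: ulp; rewrite !inE eq_sym.
  have -> : path H z [:: p; l] by rewrite /= andbT sym Hpz sym Hlp.
  by move=> /(_ isT isT).
right; exists p, q; split.
- by move: prest => /= /andP [].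
- exists l; split; first by rewrite sym.
  by apply/negP => /eqP e; move: ulp; rewrite e !inE eqxx orbT.
move=> l' Hpl' l'q z' Hlz'.
have [e|l'l] := eqVneq l' l; first by move: Hlz'; rewrite e => /claim1.
have l'notin : l' \notin p :: q :: rest'.
  rewrite !inE !negb_or (negbTE l'q) /=; apply/andP; split.
    by apply/negP => /eqP e; move: Hpl'; rewrite e irr.
  apply/negP => l'r; have := back_edge ac upr prest l'r.
  by rewrite sym Hpl'.
apply/eqP; apply/negPn/negP => z'p.
have ul' : uniq (l' :: p :: q :: rest') by rewrite cons_uniq l'notin upr.
have pl' : path H l' (p :: q :: rest') by rewrite /= sym Hpl' /=; exact: prest.
have [zin|zin] := boolP (z' \in p :: q :: rest').
  move: zin; rewrite inE => /orP [/eqP e|zr]; first by rewrite e eqxx in z'p.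
  by move: (back_edge ac ul' pl' zr); rewrite sym Hlz'.
have := mx z' (l' :: p :: q :: rest').
have -> : uniq (z' :: l' :: p :: q :: rest').
  rewrite cons_uniq ul' andbT inE negb_or zin andbT.
  by apply/negP => /eqP e; move: Hlz'; rewrite e irr.
have -> : path H z' (l' :: p :: q :: rest') by rewrite /= sym Hlz'.
by move=> /(_ isT isT); rewrite /= ltnn.
Qed.
End Paths.


Section Forest.
Variable T : finType.
Implicit Types H : rel T.

Definition ES H : {set T * T} := [set x | H x.1 x.2].

Definition remove H (p : T) (L : {set T}) : rel T :=
  fun x y => H x y && ~~ ((x == p) && (y \in L) || (y == p) && (x \in L)).

Definition relabel (Gm : zmodType) (h' : {set T} -> Gm) (p : T) (L : {set T}) (g : T -> Gm)
  : {set T} -> Gm :=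
  fun E => if [pick l in L | E == edge_of p l] is Some l then g l else h' E.

Lemma edge_ofC (x y : T) : edge_of x y = edge_of y x.
Proof. by rewrite /edge_of setUC. Qed.

Lemma edge_of_eq (x y u v : T) : edge_of x y = edge_of u v -> x = u \/ x = v.
Proof. by move=> E; apply/set2P; rewrite -/(edge_of u v) -E !inE eqxx. Qed.

Lemma relabel_new (Gm : zmodType) (h' : {set T} -> Gm) (p : T) (L : {set T}) (g : T -> Gm) l :
  p \notin L -> l \in L -> relabel h' p L g (edge_of p l) = g l.
Proof.
move=> pL lL; rewrite /relabel; case: pickP => [l' /andP [l'L /eqP E]|].
  have [e|e] := edge_of_eq (etrans (edge_ofC l p) E); last by rewrite e.
  by move: pL; rewrite -e lL.
by move=> /(_ l); rewrite lL eqxx.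
Qed.

Lemma relabel_old (Gm : zmodType) (h' : {set T} -> Gm) (p : T) (L : {set T}) (g : T -> Gm) u v :
  u \notin L -> v \notin L -> relabel h' p L g (edge_of u v) = h' (edge_of u v).
Proof.
move=> uL vL; rewrite /relabel; case: pickP => [l' /andP [l'L /eqP E]|//].
have [e|e] := edge_of_eq (etrans (edge_ofC l' p) (esym E)).
  by move: uL; rewrite -e l'L.
by move: vL; rewrite -e l'L.
Qed.

Variables (H : rel T) (p : T) (L : {set T}).
Hypotheses (sym : symmetric H) (irr : irreflexive H).

Lemma remove_sym : symmetric (remove H p L).
Proof. by move=> x y; rewrite /remove sym orbC. Qed.

Lemma remove_irr : irreflexive (remove H p L).
Proof. by move=> x; rewrite /remove irr. Qed.

Lemma remove_acyclic : acyclic H -> acyclic (remove H p L).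
Proof.
move=> ac s us hs; apply/negP => cs; have := ac s us hs; apply/negP/negPn.
by apply: sub_cycle cs => x y /andP [].
Qed.

Lemma remove_sub x y : remove H p L x y -> H x y.
Proof. by move=> /andP []. Qed.

Lemma remove_lt l : l \in L -> H p l -> p \notin L -> (#|ES (remove H p L)| < #|ES H|)%N.
Proof.
move=> lL Hpl pL; apply: proper_card; apply/properP; split.
  by apply/subsetP => x; rewrite !inE => /andP [].
exists (p, l); first by rewrite inE.
by rewrite inE /remove /= Hpl eqxx lL.
Qed.

Lemma remove_keep x y : x \notin L -> y \notin L -> remove H p L x y = H x y.
Proof. by move=> xL yL; rewrite /remove (negbTE xL) (negbTE yL) !andbF andbT. Qed.

Lemma nbhd_remove v : v != p -> v \notin L -> nbhd (remove H p L) v = nbhd H v.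
Proof.
move=> vp vL; apply/setP => u; rewrite !inE /remove (negbTE vp) (negbTE vL).
by rewrite andbF /= andbT.
Qed.

Hypothesis leaves : forall l, l \in L -> forall z, H l z -> z = p.

Lemma weight_remove (Gm : zmodType) (h' : {set T} -> Gm) g v : v != p -> v \notin L ->
  weight H (relabel h' p L g) v = weight (remove H p L) h' v.
Proof.
move=> vp vL; rewrite /weight nbhd_remove //; apply: eq_bigr => u; rewrite inE => Hvu.
rewrite relabel_old //; apply/negP => uL.
by move: (leaves uL (etrans (sym u v) Hvu)) vp => ->; rewrite eqxx.
Qed.

End Forest.


Section ForestLemma.
Variables (T : finType) (Gm : zmodType).
Hypothesis h4 : card_ge4 Gm.

Definition good_lab (H : rel T) (h : {set T} -> Gm) :=
  (forall u v, H u v -> h (edge_of u v) != 0) /\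
  (forall u v, H u v -> ~ (#|nbhd H u| = 1%N /\ #|nbhd H v| = 1%N) ->
     weight H h u != weight H h v).

Lemma nbhd_single (H : rel T) l p : H l p -> (forall z, H l z -> z = p) -> nbhd H l = [set p].
Proof.
move=> Hlp lN; apply/setP => z; rewrite !inE; apply/idP/eqP => [/lN //|->]; exact: Hlp.
Qed.

Lemma forest_step (H : rel T) :
  (forall H', symmetric H' -> irreflexive H' -> acyclic H' ->
     (#|ES H'| < #|ES H|)%N -> exists h, good_lab H' h) ->
  symmetric H -> irreflexive H -> acyclic H -> exists h, good_lab H h.
Proof.
move=> IH sym irr ac.
have [[u v] /= Huv | noE] := pickP (fun x : T * T => H x.1 x.2); last first.
  exists (fun _ => 0); split => u v Huv; by have := noE (u, v); rewrite /= Huv.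
case: (pendant sym irr ac Huv) =>
  [[l [p [Hlp lN pN]]] | [p [q [Hpq [l0 [Hpl0 l0q]] leaves]]]].
-
  pose L := [set l].
  have pL : p \notin L by rewrite inE; apply/negP => /eqP e; move: Hlp; rewrite e irr.
  have Hpl : H p l by rewrite sym.
  have lv : forall l', l' \in L -> forall z, H l' z -> z = p.
    by move=> l'; rewrite inE => /eqP ->.
  have [h' [h'0 h'w]] := IH _ (remove_sym p L sym) (remove_irr p L irr)
     (remove_acyclic p L ac) (remove_lt (set11 l) Hpl pL).
  case: h4 => s [us hs]; have [u0 [_ u00 _ _]] := avoid3 0 0 0 us hs.
  exists (relabel h' p L (fun _ => u0)).
  have onL : forall x y, H x y -> (x \in L) || (y \in L) -> edge_of x y = edge_of p l.
    move=> x y Hxy; rewrite !inE => /orP [/eqP xl|/eqP yl].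
      by move: Hxy; rewrite xl => /lN ->; rewrite edge_ofC.
    by move: Hxy; rewrite yl sym => /lN ->.
  split => x y Hxy.
  + have [xyL|] := boolP ((x \in L) || (y \in L)).
      by rewrite onL // relabel_new // set11.
    rewrite negb_or => /andP [xL yL]; rewrite relabel_old //.
    by apply: h'0; rewrite remove_keep.
  + have [xyL|] := boolP ((x \in L) || (y \in L)).
      move=> nex; exfalso; apply: nex.
      have c1 : #|nbhd H l| = 1%N by rewrite (nbhd_single Hlp lN) cards1.
      have c2 : #|nbhd H p| = 1%N by rewrite (nbhd_single Hpl pN) cards1.
      move: xyL; rewrite !inE => /orP [/eqP xl|/eqP yl].
        by move: Hxy; rewrite xl => /lN ->; split.
      by move: Hxy; rewrite yl sym => /lN ->; split.
    rewrite negb_or => /andP [xL yL] nex.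
    have xp : x != p.
      by apply/negP => /eqP e; move: Hxy; rewrite e => /pN yl'; move: yL; rewrite yl' inE eqxx.
    have yp : y != p.
      by apply/negP => /eqP e; move: Hxy; rewrite e sym => /pN xl'; move: xL; rewrite xl' inE eqxx.
    rewrite !weight_remove //; apply: h'w; first by rewrite remove_keep.
    by rewrite !nbhd_remove.
-
  pose L := [set z | H p z & z != q].
  have pL : p \notin L by rewrite inE irr.
  have qL : q \notin L by rewrite inE eqxx andbF.
  have qp : q != p by apply/negP => /eqP e; move: Hpq; rewrite e irr.
  have l0L : l0 \in L by rewrite inE Hpl0 l0q.
  have lv : forall l', l' \in L -> forall z, H l' z -> z = p.
    by move=> l'; rewrite inE => /andP [H1 H2]; apply: leaves.
  have [h' [h'0 h'w]] := IH _ (remove_sym p L sym) (remove_irr p L irr)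
     (remove_acyclic p L ac) (remove_lt l0L Hpl0 pL).
  have y0 : h' (edge_of p q) != 0 by apply: h'0; rewrite remove_keep.
  have Ln : L != set0 by apply/set0Pn; exists l0.
  have [g [g0 gX gl]] := local_lemma h4 (weight (remove H p L) h' q) y0 Ln.
  set h := relabel h' p L g.
  have wq : weight H h q = weight (remove H p L) h' q by apply: weight_remove.
  have wl : forall l, l \in L -> weight H h l = g l.
    move=> l lL; have Hlp : H l p by rewrite sym; move: lL; rewrite inE => /andP [].
    by rewrite /weight (nbhd_single Hlp (lv l lL)) big_set1 /h relabel_new.
  have wp : weight H h p = h' (edge_of p q) + \sum_(l in L) g l.
    rewrite /weight (bigD1 q) ?inE //= edge_ofC /h relabel_old //; congr (_ + _).
    rewrite (eq_bigl (fun z => z \in L)); last by move=> z; rewrite !inE.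
    by apply: eq_bigr => z zL; rewrite edge_ofC relabel_new.
  exists h; split => x y Hxy.
  + rewrite /h; have [xL|xL] := boolP (x \in L).
      by rewrite (lv x xL y Hxy) edge_ofC relabel_new ?g0.
    have [yL|yL] := boolP (y \in L).
      by rewrite (lv y yL x) ?relabel_new ?g0 // sym.
    by rewrite relabel_old //; apply: h'0; rewrite remove_keep.
  + move=> nex.
    have [xL|xL] := boolP (x \in L).
      by rewrite (lv x xL y Hxy) wp wl // eq_sym gl.
    have [yL|yL] := boolP (y \in L).
      have Hyx : H y x by rewrite sym.
      by rewrite (lv y yL x Hyx) wp wl // gl.
    have [xp|xp] := eqVneq x p.
      have yq : y = q by apply/eqP; apply/negPn/negP => yq; move: yL; rewrite inE -xp Hxy yq.
      by rewrite xp yq wp wq.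
    have [yp|yp] := eqVneq y p.
      have xq : x = q by apply/eqP; apply/negPn/negP => xq; move: xL; rewrite inE -yp sym Hxy xq.
      by rewrite yp xq wp wq eq_sym.
    rewrite /h !weight_remove //; apply: h'w; first by rewrite remove_keep.
    by rewrite !nbhd_remove.
Qed.

Lemma forest_lemma (H : rel T) : symmetric H -> irreflexive H -> acyclic H ->
  exists h, good_lab H h.
Proof.
move: {2}#|ES H| (leqnn #|ES H|) => n; elim: n H => [|n IHn] H hn.
  by apply: forest_step => H' _ _ _ lt; move: (leq_trans lt hn).
apply: forest_step => H' s' i' a' lt; apply: IHn => //.
by rewrite -ltnS; apply: leq_trans lt hn.
Qed.
End ForestLemma.


Section Extend.
Variables (T : finType) (e F : rel T).
Hypotheses (esym : symmetric e) (eirr : irreflexive e) (noiso : no_isolated_edge e).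
Hypotheses (Fsym : symmetric F) (Fe : forall x y, F x y -> e x y) (Fac : acyclic F).

Definition RS (S : {set T * T}) : rel T := fun x y => (x, y) \in S.

Definition goodS (S : {set T * T}) :=
  [/\ symmetric (RS S), forall x y, RS S x y -> e x y,
      forall x y, F x y -> RS S x y & acyclic (RS S)].

Lemma nbhd1 (H : rel T) a b : H a b -> #|nbhd H a| = 1%N -> nbhd H a = [set b].
Proof.
move=> Hab /eqP /cards1P [x E].
have : b \in nbhd H a by rewrite inE.
by rewrite E inE => /eqP <-.
Qed.

Lemma ext_step S a b w : goodS S -> RS S a b -> #|nbhd (RS S) a| = 1%N ->
  #|nbhd (RS S) b| = 1%N -> e a w -> w != b ->
  goodS (S :|: [set (a, w); (w, a)]) /\ (#|S| < #|S :|: [set (a, w); (w, a)]|)%N.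
Proof.
move=> [Ssym Se SF Sac] Sab da db eaw wb.
have Sba : RS S b a by rewrite Ssym.
have Na := nbhd1 Sab da; have Nb := nbhd1 Sba db.
have Sa : forall z, RS S a z -> z = b.
  by move=> z Hz; apply/set1P; rewrite -Na inE.
have Sb : forall z, RS S b z -> z = a.
  by move=> z Hz; apply/set1P; rewrite -Nb inE.
have wa : w != a by apply/negP => /eqP e1; move: eaw; rewrite e1 eirr.
have ab : a != b by apply/negP => /eqP e1; move: (Se _ _ Sab); rewrite e1 eirr.
set S' := S :|: _.
have RS'E : forall x y, RS S' x y = RS S x y || ((x == a) && (y == w)) || ((x == w) && (y == a)).
  by move=> x y; rewrite /RS /S' !inE !xpair_eqE orbA.
split; last first.
  apply: proper_card; apply/properP; split; first exact: subsetUl.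
  exists (a, w); first by rewrite /S' !inE eqxx orbT.
  by apply/negP => /Sa e1; move: wb; rewrite e1 eqxx.
split.
- move=> x y; rewrite !RS'E Ssym; case: (x == a) (y == a) (x == w) (y == w) => [] [] [] [] /=; by rewrite ?orbT ?orbF.
- move=> x y; rewrite RS'E => /orP [/orP [/Se //|/andP [/eqP -> /eqP ->] //]|].
  by move=> /andP [/eqP -> /eqP ->]; rewrite esym.
- by move=> x y /SF; rewrite RS'E => ->.
move=> s us hs; apply/negP => cs.
have bs : b \notin s.
  apply/negP => bs; have [c [d [cd Rbc Rdb cs' ds']]] := cyc_two_nbrs us hs cs bs.
  move: Rbc Rdb; rewrite !RS'E (eq_sym b w) (negbTE wb) (eq_sym b a) (negbTE ab) !andbF !orbF.
  by move=> /Sb e0; rewrite Ssym => /Sb e1; move: cd; rewrite e0 e1 eqxx.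
have as_ : a \notin s.
  apply/negP => as_; have [c [d [cd Rac Rdc cs' ds']]] := cyc_two_nbrs us hs cs as_.
  move: Rac Rdc; rewrite !RS'E eqxx (eq_sym a w) (negbTE wa) /= !andbF !orbF andbT.
  have nb : forall z, z \in s -> RS S a z = false.
    by move=> z zs; apply/negP => /Sa e1; move: bs; rewrite -e1 zs.
  rewrite nb // Ssym nb //= => /eqP e0 /eqP e1; by move: cd; rewrite e0 e1 eqxx.
have eqR : {in (fun x => x \in s) &, RS S' =2 RS S}.
  move=> x y xs ys; rewrite RS'E.
  have -> : (x == a) = false by apply/negP => /eqP e1; move: as_; rewrite -e1 xs.
  have -> : (y == a) = false by apply/negP => /eqP e1; move: as_; rewrite -e1 ys.
  by rewrite /= !andbF !orbF.
have := Sac s us hs; apply/negP/negPn; move: cs.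
by rewrite (eq_in_cycle eqR) //; apply/allP => x xs.
Qed.

Definition ext_ok (H : rel T) := [/\ symmetric H, irreflexive H, acyclic H,
   (forall x y, F x y -> H x y) /\ (forall x y, H x y -> e x y) &
   forall u v, H u v -> ~ (#|nbhd H u| = 1%N /\ #|nbhd H v| = 1%N)].

Lemma ext_stepS (S : {set T * T}) : (forall S', goodS S' -> (#|S| < #|S'|)%N -> exists H, ext_ok H) ->
  goodS S -> exists H, ext_ok H.
Proof.
move=> IH gS; have [Ssym Se SF Sac] := gS.
have [K2|noK2] := boolP [exists u, exists v,
   [&& RS S u v, (#|nbhd (RS S) u| == 1%N) & (#|nbhd (RS S) v| == 1%N)]]; last first.
  exists (RS S); split => //.
  - by move=> x; apply/negP => /Se; rewrite eirr.
  - move=> u v Huv [du dv]; move/negP: noK2; apply; apply/existsP; exists u; apply/existsP; exists v.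
    by rewrite Huv du dv !eqxx.
move/existsP: K2 => [u /existsP [v /and3P [Huv /eqP du /eqP dv]]].
have Hvu : RS S v u by rewrite Ssym.
have key : forall a b, RS S a b -> #|nbhd (RS S) a| = 1%N -> #|nbhd (RS S) b| = 1%N ->
    #|nbhd e a| <> 1%N -> exists H, ext_ok H.
  move=> a b Sab da db dea.
  have eab : e a b := Se _ _ Sab.
  have [/existsP [w /andP [eaw wb]]|nw] := boolP [exists w, e a w && (w != b)].
    have [g' lt] := ext_step gS Sab da db eaw wb.
    exact: IH g' lt.
  exfalso; apply: dea; suff -> : nbhd e a = [set b] by rewrite cards1.
  apply/setP => z; rewrite !inE; apply/idP/eqP => [eaz|->//].
  apply/eqP; apply/negPn/negP => zb; move/negP: nw; apply; apply/existsP; exists z.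
  by rewrite eaz zb.
have := noiso (Se _ _ Huv).
have [deu|deu] := eqVneq #|nbhd e u| 1%N; last by move=> _; apply: (key u v) => //; apply/eqP.
have [dev|dev] := eqVneq #|nbhd e v| 1%N; first by move=> []; split.
by move=> _; apply: (key v u) => //; apply/eqP.
Qed.

Lemma ext_ind n (S : {set T * T}) : (#|[set: T * T]| - #|S| <= n)%N -> goodS S -> exists H, ext_ok H.
Proof.
elim: n S => [|n IH] S hn; apply: ext_stepS => S' gS' lt.
  have := subset_leq_card (subsetT S'); lia.
apply: IH gS'; have := subset_leq_card (subsetT S'); lia.
Qed.

Lemma extend_forest : exists H, ext_ok H.
Proof.
pose S0 := [set x : T * T | F x.1 x.2].
apply: (@ext_ind #|[set: T * T]| S0); first exact: leq_subr.
split.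
- by move=> x y; rewrite /RS !inE /= Fsym.
- by move=> x y; rewrite /RS inE => /Fe.
- by move=> x y Fxy; rewrite /RS inE.
- move=> s us hs; rewrite (@eq_cycle _ _ F) ?Fac // => x y; by rewrite /RS inE.
Qed.

End Extend.

Unset Implicit Arguments.

Lemma edge_of_eq2 (T : finType) (x y u v : T) : edge_of x y = edge_of u v ->
  (x = u /\ y = v) \/ (x = v /\ y = u).
Proof.
move=> E.
have [xu|xv] := edge_of_eq E.
  have [yu|yv] := edge_of_eq (etrans (edge_ofC y x) E); last by left.
  have [vx|vy] := edge_of_eq (etrans (edge_ofC v u) (esym E)); left; split => //; congruence.
have [yu|yv] := edge_of_eq (etrans (edge_ofC y x) E); first by right.
have [ux|uy] := edge_of_eq (esym E); right; split => //; congruence.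
Qed.

Arguments edge_of_eq2 {T x y u v}.

Theorem corollary5 (a : nat) (T : finType) (e : rel T)
  (G : zmodType) (Gi : 'I_a -> zmodType) (phi : G -> forall i, Gi i) :
  (0 < a)%N ->
  simple_graph e ->
  arboricity_le e a ->
  no_isolated_edge e ->
  iso_to_product phi ->
  (forall i, card_ge4 (Gi i)) ->
  exists f : {set T} -> G,
    (forall u v, e u v -> f (edge_of u v) != 0) /\
    (forall u v, e u v -> weight e f u != weight e f v).
Proof.
move=> a0 [esym eirr] [c hc] noiso [phiD [phiI phiS]] h4.
have ex : forall i : 'I_a, exists Hh : rel T * ({set T} -> Gi i),
   [/\ symmetric Hh.1, (forall x y, e x y -> c (edge_of x y) = i -> Hh.1 x y),
       (forall x y, Hh.1 x y -> e x y),
       (forall u v, Hh.1 u v -> ~ (#|nbhd Hh.1 u| = 1%N /\ #|nbhd Hh.1 v| = 1%N)) &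
       good_lab Hh.1 Hh.2].
  move=> i.
  pose F x y := e x y && (c (edge_of x y) == i).
  have Fsym : symmetric F by move=> x y; rewrite /F esym edge_ofC.
  have Fe : forall x y, F x y -> e x y by move=> x y /andP [].
  have [H [Hsym Hirr Hac [FH He] Hex]] := extend_forest esym eirr noiso Fsym Fe (hc i).
  have [h hg] := forest_lemma (h4 i) Hsym Hirr Hac.
  exists (H, h); split => //= x y exy cxy; apply: FH; by rewrite /F exy cxy eqxx.
have [HH HHs] := fin_all_exists ex.
pose g (E : {set T}) : forall i, Gi i := fun i =>
  if [exists x, exists y, (E == edge_of x y) && (HH i).1 x y] then (HH i).2 E else 0.
have gE : forall i u v, g (edge_of u v) i =
    if (HH i).1 u v then (HH i).2 (edge_of u v) else 0.
  move=> i u v; rewrite /g; have [Hs _ _ _ _] := HHs i.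
  case: ifP => [/existsP [x /existsP [y /andP [/eqP E Hxy]]]|nex].
    have [[-> ->]|[-> ->]] := edge_of_eq2 E; first by rewrite Hxy.
    by rewrite Hs Hxy.
  case: ifP => // Huv.
  move/negbT/negP: nex => nex; exfalso; apply: nex.
  by apply/existsP; exists u; apply/existsP; exists v; rewrite eqxx Huv.
have [f fP] := fin_all_exists (fun E : {set T} => phiS (g E)).
have phi0 : forall i, phi 0 i = 0.
  move=> i; have h := phiD 0 0 i; rewrite addr0 in h.
  by apply: (@addrI _ (phi 0 i)); rewrite addr0 -h.
have phisum : forall i (A : {set T}) (Fn : T -> G),
    phi (\sum_(u in A) Fn u) i = \sum_(u in A) phi (Fn u) i.
  by move=> i A Fn; apply: (big_morph (fun x => phi x i) (fun x y => phiD x y i) (phi0 i)).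
have W : forall i v, phi (weight e f v) i = weight (HH i).1 (HH i).2 v.
  move=> i v; rewrite /weight phisum.
  have [Hs _ He _ _] := HHs i.
  under eq_bigr => u _ do rewrite fP gE.
  rewrite -big_mkcondr; apply: eq_bigl => u; rewrite !inE Hs.
  by case: (boolP ((HH i).1 v u)) => [hvu|_]; [rewrite He | rewrite andbF].
exists f; split => u v euv.
  set i := c (edge_of u v).
  have [Hs Hc He Hex [Hnz Hw]] := HHs i.
  have Huv : (HH i).1 u v := Hc u v euv erefl.
  apply/eqP => f0.
  have : g (edge_of u v) i = 0 by rewrite -fP f0 phi0.
  by rewrite gE Huv => h0; move: (Hnz u v Huv); rewrite h0 eqxx.
set i := c (edge_of u v).
have [Hs Hc He Hex [Hnz Hw]] := HHs i.
have Huv : (HH i).1 u v := Hc u v euv erefl.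
apply/negP => /eqP wE.
by have := Hw u v Huv (Hex u v Huv); rewrite -!W wE eqxx.
Qed.
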